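(* Let $0<q\leq 1$, $k\geq 1$ and $t\geq k$ be real numbers. If $x\geq 1$ or $x\leq 0$, then $$(1+t)^x\leq q^x+\frac{(1+k)^x-q^x}{k^x}\,t^x .$$ *)

(* Defs.v *)
(* real powers via Rpower (a^x = exp (x * ln a), for a > 0). *)
From Stdlib Require Import Reals.

(* Main.v *)
Require Import Defs.
From Stdlib Require Import Reals Lra.
Open Scope R_scope.

Lemma lnq_le0 q : 0 < q -> q <= 1 -> ln q <= 0.
Proof. intros. rewrite <- ln_1. destruct (Req_dec q 1) as [->|N]; [lra|]. left; apply ln_increasing; lra. Qed.

Lemma exp_le a b : a <= b -> exp a <= exp b.
Proof. intros [H|H]. left; apply exp_increasing; exact H. subst; lra. Qed.

Lemma qx_le1 q x : 0 < q -> q <= 1 -> 0 <= x -> Rpower q x <= 1.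
Proof.
  intros. unfold Rpower. rewrite <- exp_0. apply exp_le.
  pose proof (lnq_le0 q H H0). nra.
Qed.

Lemma qx_ge1 q x : 0 < q -> q <= 1 -> x <= 0 -> 1 <= Rpower q x.
Proof.
  intros. unfold Rpower. rewrite <- exp_0. apply exp_le.
  pose proof (lnq_le0 q H H0). nra.
Qed.

Lemma pow_pos a e : 0 < Rpower a e.
Proof. unfold Rpower. apply exp_pos. Qed.

Lemma fderiv q x c : 0 < c ->
  derivable_pt_lim (fun y => Rpower (1 + y) x - Rpower q x * Rpower y x) c
    (x * Rpower (1 + c) (x - 1) * 1 - Rpower q x * (x * Rpower c (x - 1))).
Proof.
  intros Hc.
  apply derivable_pt_lim_minus.
  - change (fun y => Rpower (1 + y) x) with
      (comp (fun z => Rpower z x) (fun y => 1 + y)).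
    apply derivable_pt_lim_comp.
    + assert (H1 := derivable_pt_lim_plus (fct_cte 1) id c 0 1
         (derivable_pt_lim_const 1 c) (derivable_pt_lim_id c)).
      replace (0 + 1) with 1 in H1 by ring. exact H1.
    + apply derivable_pt_lim_power. lra.
  - apply derivable_pt_lim_scal. apply derivable_pt_lim_power. exact Hc.
Qed.

Lemma fmono q x s u : 0 < q -> q <= 1 -> (1 <= x \/ x <= 0) -> 0 < s -> s <= u ->
  Rpower (1 + s) x - Rpower q x * Rpower s x <= Rpower (1 + u) x - Rpower q x * Rpower u x.
Proof.
  intros Hq0 Hq1 Hx Hs Hsu.
  destruct (Req_dec s u) as [E|Ne]. { subst; lra. }
  destruct (MVT_cor2 (fun y => Rpower (1 + y) x - Rpower q x * Rpower y x)
     (fun c => x * Rpower (1 + c) (x - 1) * 1 - Rpower q x * (x * Rpower c (x - 1))) s u)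
     as [c [Hc1 Hc2]]; [lra| intros; apply fderiv; lra |].
  cbv beta in Hc1.
  assert (D : 0 <= x * Rpower (1 + c) (x - 1) * 1 - Rpower q x * (x * Rpower c (x - 1))).
  { destruct Hx as [Hx|Hx].
    - assert (A : Rpower c (x-1) <= Rpower (1+c) (x-1)) by (apply Rle_Rpower_l; lra).
      pose proof (qx_le1 q x Hq0 Hq1 ltac:(lra)).
      pose proof (pow_pos c (x-1)). pose proof (pow_pos q x).
      assert (Rpower q x * Rpower c (x-1) <= Rpower (1+c) (x-1)) by nra.
      nra.
    - assert (A : Rpower (1+c) (x-1) <= Rpower c (x-1)).
      { replace (x-1) with (- (1-x)) by ring. rewrite !Rpower_Ropp.
        apply Rinv_le_contravar. apply pow_pos. apply Rle_Rpower_l; lra. }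
      pose proof (qx_ge1 q x Hq0 Hq1 Hx).
      pose proof (pow_pos c (x-1)).
      assert (Rpower (1+c) (x-1) <= Rpower q x * Rpower c (x-1)) by nra.
      nra. }
  nra.
Qed.

Theorem lemma2 (q k t x : R)
  (hq0 : 0 < q) (hq1 : q <= 1) (hk : 1 <= k) (ht : k <= t)
  (hx : 1 <= x \/ x <= 0) :
  Rpower (1 + t) x <=
  Rpower q x + (Rpower (1 + k) x - Rpower q x) / Rpower k x * Rpower t x.
Proof.
  assert (key : forall a, 0 < a ->
     Rpower (1 + a) x - Rpower q x =
     Rpower a x * (Rpower (1 + / a) x - Rpower q x * Rpower (/ a) x)).
  { intros a Ha.
    replace (1 + a) with (a * (1 + / a)) by (field; lra).
    rewrite <- Rpower_mult_distr by (try lra; assert (0 < / a) by (apply Rinv_0_lt_compat; lra); lra).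
    assert (E : Rpower (/ a) x = / Rpower a x).
    { unfold Rpower. rewrite ln_Rinv by lra.
      replace (x * - ln a) with (- (x * ln a)) by ring. apply exp_Ropp. }
    rewrite E. pose proof (pow_pos a x). field. lra. }
  pose proof (fmono q x (/ t) (/ k) hq0 hq1 hx ltac:(apply Rinv_0_lt_compat; lra)
     ltac:(apply Rinv_le_contravar; lra)) as M.
  pose proof (key t ltac:(lra)) as Kt. pose proof (key k ltac:(lra)) as Kk.
  rewrite Kk. pose proof (pow_pos k x). pose proof (pow_pos t x).
  replace (Rpower k x * (Rpower (1 + / k) x - Rpower q x * Rpower (/ k) x) / Rpower k x)
    with (Rpower (1 + / k) x - Rpower q x * Rpower (/ k) x) by (field; lra).
  nra.
Qed.
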